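(* Let $S$ be a consistent approximate subdivision, $e[a,b]\in S$, $p\in L(e)$ and $q\in U(e)$, and suppose $p\notin\{a,b\}$ or $q\notin\{a,b\}$. If $e$ is increasing or horizontal then $p^{+-}\cap q^{-+}=\emptyset$; if $e$ is decreasing or horizontal then $p^{--}\cap q^{++}=\emptyset$.
   Context: Points $p\in\mathbb{R}^2$ have coordinates $(p_x,p_y)$. A curve is an open, bounded, piecewise-algebraic arc that is both $x$-monotone and $y$-monotone; a curve with endpoints $a,b$ where $a_x\le b_x$ is written $e[a,b]$. It is vertical if $a_x=b_x$; a non-vertical curve is horizontal if $a_y=b_y$, increasing if $a_y<b_y$, decreasing if $a_y>b_y$. Sets $s,t$ overlap in $x$ if there exist $p\in s$, $q\in t$ with $p_x=q_x$. An approximate subdivision is a set $S$ of curves together with a binary relation $\prec_y$ on $S$ whose transitive closure is irreflexive, such that for $e,f\in S$: $e\prec_y f$ or $f\prec_y e$ holds iff $e$ and $f$ overlap in $x$. Write $e\preceq_y f$ for ($e\prec_y f$ or $e=f$), and $e\succ_y f$, $e\succeq_y f$ for $f\prec_y e$, $f\preceq_y e$. For $e[a,b]\in S$, $L(e)$ is the set of endpoints $p$ of curves $f\in S$ with $f\preceq_y e$ and $a_x\le p_x\le b_x$; $U(e)$ is defined likewise with $f\succeq_y e$. $S$ is consistent if every curve $e[a,b]\in S$ satisfies: (1) for each $q\in U(e)$ there is no $p\in L(e)$ with $a_x<p_x=q_x<b_x$ and $p_y\ge q_y$; (2) for each $f[c,d]\in S$ with $f\succ_y e$: $a_x=c_x$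 implies $a_y\le c_y$, and $b_x=d_x$ implies $b_y\le d_y$; (3a) for each $p\in L(e)$ there are no $c,d\in U(e)$ with $c_x<p_x<d_x$ and $c_y,d_y\le p_y$; (3b) for each $q\in U(e)$ there are no $c,d\in L(e)$ with $c_x<q_x<d_x$ and $c_y,d_y\ge q_y$; (4) if $e$ is vertical, there is no endpoint $p$ of any curve $f\in S$ with $p_x=a_x$ and $p_y$ strictly between $a_y$ and $b_y$. For a point $p$: $p^{++}=[p_x,\infty)\times[p_y,\infty)$, $p^{-+}=(-\infty,p_x]\times[p_y,\infty)$, $p^{+-}=[p_x,\infty)\times(-\infty,p_y]$, $p^{--}=(-\infty,p_x]\times(-\infty,p_y]$. *)

(* Defs.v *)
From Stdlib Require Import Reals Relations.
Open Scope R_scope.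

Definition point := (R * R)%type.
Definition px (p : point) : R := fst p.
Definition py (p : point) : R := snd p.

(* A curve is represented abstractly by an element of a type C, with its
   left endpoint [src e] = a and right endpoint [tgt e] = b (a_x <= b_x).
   An open x- and y-monotone arc e[a,b] projects onto the x-axis as the
   open interval (a_x, b_x) if non-c_vertical, and as {a_x} if c_vertical. *)
Definition in_xproj (a b : point) (x : R) : Prop :=
  (px a = px b /\ x = px a) \/ (px a < x < px b).

Definition overlap_x (a b c d : point) : Prop :=
  exists x, in_xproj a b x /\ in_xproj c d x.

Definition c_vertical (a b : point) : Prop := px a = px b.
Definition c_horizontal (a b : point) : Prop := px a <> px b /\ py a = py b.
Definition c_increasing (a b : point) : Prop := px a <> px b /\ py a < py b.
Definition c_decreasing (a b : point) : Prop := px a <> px b /\ py a > py b.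

(* Approximate subdivision: set of curves C (every element of C is in S),
   with endpoints src/tgt and relation prec (= ≺_y). *)
Definition approx_subdivision {C : Type} (src tgt : C -> point)
  (prec : C -> C -> Prop) : Prop :=
  (forall e, px (src e) <= px (tgt e) /\ src e <> tgt e) /\
  (forall e, ~ clos_trans C prec e e) /\
  (forall e f, e <> f ->
     ((prec e f \/ prec f e) <-> overlap_x (src e) (tgt e) (src f) (tgt f))).

Definition preceq {C : Type} (prec : C -> C -> Prop) (e f : C) : Prop :=
  prec e f \/ e = f.

Definition is_endpoint {C : Type} (src tgt : C -> point) (f : C) (p : point) :=
  p = src f \/ p = tgt f.

Definition Lset {C : Type} (src tgt : C -> point) (prec : C -> C -> Prop)
  (e : C) (p : point) : Prop :=
  exists f, preceq prec f e /\ is_endpoint src tgt f p /\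
    px (src e) <= px p <= px (tgt e).

Definition Uset {C : Type} (src tgt : C -> point) (prec : C -> C -> Prop)
  (e : C) (p : point) : Prop :=
  exists f, preceq prec e f /\ is_endpoint src tgt f p /\
    px (src e) <= px p <= px (tgt e).

Definition consistent {C : Type} (src tgt : C -> point)
  (prec : C -> C -> Prop) : Prop :=
  approx_subdivision src tgt prec /\
  forall e : C, let a := src e in let b := tgt e in
  (forall q, Uset src tgt prec e q ->
     ~ exists p, Lset src tgt prec e p /\
         px a < px p /\ px p = px q /\ px q < px b /\ py p >= py q) /\
  (forall f, prec e f ->
     (px a = px (src f) -> py a <= py (src f)) /\
     (px b = px (tgt f) -> py b <= py (tgt f))) /\
  (forall p, Lset src tgt prec e p ->
     ~ exists c d, Uset src tgt prec e c /\ Uset src tgt prec e d /\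
         px c < px p < px d /\ py c <= py p /\ py d <= py p) /\
  (forall q, Uset src tgt prec e q ->
     ~ exists c d, Lset src tgt prec e c /\ Lset src tgt prec e d /\
         px c < px q < px d /\ py c >= py q /\ py d >= py q) /\
  (c_vertical a b ->
     ~ exists f p, is_endpoint src tgt f p /\ px p = px a /\
         ((py a < py p < py b) \/ (py b < py p < py a))).

Definition qPP (p z : point) : Prop := px p <= px z /\ py p <= py z.
Definition qMP (p z : point) : Prop := px z <= px p /\ py p <= py z.
Definition qPM (p z : point) : Prop := px p <= px z /\ py z <= py p.
Definition qMM (p z : point) : Prop := px z <= px p /\ py z <= py p.

Definition qdisjoint (A B : point -> Prop) : Prop := ~ exists z, A z /\ B z.

(* Main.v *)
Require Import Defs.
From Stdlib Require Import Reals Relations Lra.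
Open Scope R_scope.

Section S.
Context {C : Type} (src tgt : C -> point) (prec : C -> C -> Prop).

Lemma prec_neq (H : consistent src tgt prec) f e : prec f e -> f <> e.
Proof.
  destruct H as [[_ [Hirr _]] _]. intros Hp ->. apply (Hirr e). now apply t_step.
Qed.

Lemma ovl (H : consistent src tgt prec) f e : prec f e \/ prec e f ->
  f <> e -> exists x, in_xproj (src f) (tgt f) x /\ in_xproj (src e) (tgt e) x.
Proof.
  destruct H as [[_ [_ Hov]] _]. intros Hp Hne.
  apply (Hov f e Hne). tauto.
Qed.

Lemma L_a (H : consistent src tgt prec) e p :
  px (src e) <> px (tgt e) -> Lset src tgt prec e p ->
  px p = px (src e) -> py p <= py (src e).
Proof.
  intros Hnv [f [Hf [Hend Hx]]] Hpx.
  destruct Hf as [Hf | ->].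
  - pose proof (prec_neq H _ _ Hf) as Hne.
    destruct (ovl H f e (or_introl Hf) Hne) as [x [Hx1 Hx2]].
    destruct Hend as [-> | ->].
    + destruct H as [_ Hall]. destruct (Hall f) as [_ [H2 _]].
      apply (proj1 (H2 e Hf)). auto.
    + exfalso. unfold in_xproj in *. destruct H as [[Hw _] _].
      destruct (Hw f). destruct (Hw e). lra.
  - destruct Hend as [-> | ->]; [lra|]. exfalso; auto.
Qed.

Lemma L_b (H : consistent src tgt prec) e p :
  px (src e) <> px (tgt e) -> Lset src tgt prec e p ->
  px p = px (tgt e) -> py p <= py (tgt e).
Proof.
  intros Hnv [f [Hf [Hend Hx]]] Hpx.
  destruct Hf as [Hf | ->].
  - pose proof (prec_neq H _ _ Hf) as Hne.
    destruct (ovl H f e (or_introl Hf) Hne) as [x [Hx1 Hx2]].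
    destruct Hend as [-> | ->].
    + exfalso. unfold in_xproj in *. destruct H as [[Hw _] _].
      destruct (Hw f). destruct (Hw e). lra.
    + destruct H as [_ Hall]. destruct (Hall f) as [_ [H2 _]].
      apply (proj2 (H2 e Hf)). auto.
  - destruct Hend as [-> | ->]; [|lra]. exfalso; auto.
Qed.

Lemma U_a (H : consistent src tgt prec) e p :
  px (src e) <> px (tgt e) -> Uset src tgt prec e p ->
  px p = px (src e) -> py (src e) <= py p.
Proof.
  intros Hnv [f [Hf [Hend Hx]]] Hpx.
  destruct Hf as [Hf | <-].
  - pose proof (prec_neq H _ _ Hf) as Hne.
    destruct (ovl H f e (or_intror Hf) (not_eq_sym Hne)) as [x [Hx1 Hx2]].
    destruct Hend as [-> | ->].
    + destruct H as [_ Hall]. destruct (Hall e) as [_ [H2 _]].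
      apply (proj1 (H2 f Hf)). auto.
    + exfalso. unfold in_xproj in *. destruct H as [[Hw _] _].
      destruct (Hw f). destruct (Hw e). lra.
  - destruct Hend as [-> | ->]; [lra|]. exfalso; auto.
Qed.

Lemma U_b (H : consistent src tgt prec) e p :
  px (src e) <> px (tgt e) -> Uset src tgt prec e p ->
  px p = px (tgt e) -> py (tgt e) <= py p.
Proof.
  intros Hnv [f [Hf [Hend Hx]]] Hpx.
  destruct Hf as [Hf | <-].
  - pose proof (prec_neq H _ _ Hf) as Hne.
    destruct (ovl H f e (or_intror Hf) (not_eq_sym Hne)) as [x [Hx1 Hx2]].
    destruct Hend as [-> | ->].
    + exfalso. unfold in_xproj in *. destruct H as [[Hw _] _].
      destruct (Hw f). destruct (Hw e). lra.
    + destruct H as [_ Hall]. destruct (Hall e) as [_ [H2 _]].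
      apply (proj2 (H2 f Hf)). auto.
  - destruct Hend as [-> | ->]; [|lra]. exfalso; auto.
Qed.

Lemma a_in_L e : px (src e) <= px (tgt e) -> Lset src tgt prec e (src e) /\ Uset src tgt prec e (src e)
  /\ (px (src e) <= px (tgt e) -> Lset src tgt prec e (tgt e) /\ Uset src tgt prec e (tgt e)).
Proof.
  intro Hle.
  split; [|split]; [| |intro; split];
  exists e; (split; [right; reflexivity|]); unfold is_endpoint; (split; [tauto|lra]).
Qed.

Lemma pt_eq (p q : point) : px p = px q -> py p = py q -> p = q.
Proof. destruct p, q; unfold px, py; simpl; intros -> ->; reflexivity. Qed.

End S.

Theorem lemma4 (C : Type) (src tgt : C -> point) (prec : C -> C -> Prop)
  (e : C) (p q : point) :
  consistent src tgt prec ->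
  Lset src tgt prec e p ->
  Uset src tgt prec e q ->
  ((p <> src e /\ p <> tgt e) \/ (q <> src e /\ q <> tgt e)) ->
  ((c_increasing (src e) (tgt e) \/ c_horizontal (src e) (tgt e)) ->
     qdisjoint (qPM p) (qMP q)) /\
  ((c_decreasing (src e) (tgt e) \/ c_horizontal (src e) (tgt e)) ->
     qdisjoint (qMM p) (qPP q)).
Proof.
  intros H HL HU Hnot.
  pose proof H as H'. destruct H' as [[Hw _] Hall].
  destruct (Hall e) as [H1 [_ [H3a [H3b _]]]].
  destruct (Hw e) as [Hab _].
  destruct (a_in_L src tgt prec e Hab) as [HaL [HaU Hb]].
  destruct (Hb Hab) as [HbL HbU].
  pose proof HL as [f1 [_ [_ HLx]]]. pose proof HU as [f2 [_ [_ HUx]]].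
  set (a := src e) in *. set (b := tgt e) in *.
  assert (Hnv : c_increasing a b \/ c_horizontal a b \/ c_decreasing a b
     -> px a <> px b) by (unfold c_increasing, c_horizontal, c_decreasing; intuition).
  split.
  - intros Hinc [z [[Hz1 Hz2] [Hz3 Hz4]]].
    assert (Hnv' : px a <> px b) by (apply Hnv; tauto).
    assert (Hay : py a <= py b) by (unfold c_increasing, c_horizontal in Hinc; destruct Hinc; lra).
    pose proof (L_a src tgt prec H e p Hnv' HL) as La.
    pose proof (L_b src tgt prec H e p Hnv' HL) as Lb.
    pose proof (U_a src tgt prec H e q Hnv' HU) as Ua.
    pose proof (U_b src tgt prec H e q Hnv' HU) as Ub.
    fold a b in La, Lb, Ua, Ub.
    destruct (Rle_lt_or_eq_dec (px p) (px q)) as [Hlt | Heq]; [lra| |].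
    + destruct (Rle_lt_or_eq_dec (px q) (px b)) as [Hqb | Hqb]; [lra| |].
      * destruct (Rle_lt_dec (py q) (py b)).
        -- apply (H3b q HU). exists p, b. repeat split; auto; lra.
        -- destruct (Rle_lt_or_eq_dec (px a) (px p)) as [Hpa | Hpa]; [lra| |].
           ++ apply (H3a p HL). exists a, q. repeat split; auto; lra.
           ++ specialize (La (eq_sym Hpa)). lra.
      * specialize (Ub Hqb).
        destruct (Rle_lt_or_eq_dec (px a) (px p)) as [Hpa | Hpa]; [lra| |].
        -- apply (H3a p HL). exists a, q. repeat split; auto; lra.
        -- specialize (La (eq_sym Hpa)).
           assert (p = a) by (apply pt_eq; lra).
           assert (q = b) by (apply pt_eq; lra).
           subst; tauto.
    + destruct (Rle_lt_or_eq_dec (px a) (px p)) as [Hpa | Hpa]; [lra| |].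
      * destruct (Rle_lt_or_eq_dec (px p) (px b)) as [Hpb | Hpb]; [lra| |].
        -- apply (H1 q HU). exists p. repeat split; auto; lra.
        -- specialize (Lb Hpb). specialize (Ub ltac:(lra)).
           assert (p = b) by (apply pt_eq; lra).
           assert (q = b) by (apply pt_eq; lra).
           subst; tauto.
      * specialize (La (eq_sym Hpa)). specialize (Ua ltac:(lra)).
        assert (p = a) by (apply pt_eq; lra).
        assert (q = a) by (apply pt_eq; lra).
        subst; tauto.
  - intros Hdec [z [[Hz1 Hz2] [Hz3 Hz4]]].
    assert (Hnv' : px a <> px b) by (apply Hnv; tauto).
    assert (Hay : py b <= py a) by (unfold c_decreasing, c_horizontal in Hdec; destruct Hdec; lra).
    pose proof (L_a src tgt prec H e p Hnv' HL) as La.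
    pose proof (L_b src tgt prec H e p Hnv' HL) as Lb.
    pose proof (U_a src tgt prec H e q Hnv' HU) as Ua.
    pose proof (U_b src tgt prec H e q Hnv' HU) as Ub.
    fold a b in La, Lb, Ua, Ub.
    destruct (Rle_lt_or_eq_dec (px q) (px p)) as [Hlt | Heq]; [lra| |].
    + destruct (Rle_lt_or_eq_dec (px a) (px q)) as [Hqa | Hqa]; [lra| |].
      * destruct (Rle_lt_dec (py q) (py a)).
        -- apply (H3b q HU). exists a, p. repeat split; auto; lra.
        -- destruct (Rle_lt_or_eq_dec (px p) (px b)) as [Hpb | Hpb]; [lra| |].
           ++ apply (H3a p HL). exists q, b. repeat split; auto; lra.
           ++ specialize (Lb Hpb). lra.
      * specialize (Ua (eq_sym Hqa)).
        destruct (Rle_lt_or_eq_dec (px p) (px b)) as [Hpb | Hpb]; [lra| |].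
        -- apply (H3a p HL). exists q, b. repeat split; auto; lra.
        -- specialize (Lb Hpb).
           assert (p = b) by (apply pt_eq; lra).
           assert (q = a) by (apply pt_eq; lra).
           subst; tauto.
    + destruct (Rle_lt_or_eq_dec (px a) (px p)) as [Hpa | Hpa]; [lra| |].
      * destruct (Rle_lt_or_eq_dec (px p) (px b)) as [Hpb | Hpb]; [lra| |].
        -- apply (H1 q HU). exists p. repeat split; auto; lra.
        -- specialize (Lb Hpb). specialize (Ub ltac:(lra)).
           assert (p = b) by (apply pt_eq; lra).
           assert (q = b) by (apply pt_eq; lra).
           subst; tauto.
      * specialize (La (eq_sym Hpa)). specialize (Ua ltac:(lra)).
        assert (p = a) by (apply pt_eq; lra).
        assert (q = a) by (apply pt_eq; lra).
        subst; tauto.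
Qed.
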